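(* Let $n$ be a positive integer, let $X=\{(x,y)\in\mathbb{Z}^2 : \max(|x|,|y|) = n\}$ (the boundary of the digital square $[-n,n]_{\mathbb{Z}}^2$), and let $Y = X\setminus\{(n,n)\}$. Let $d=d_1$ be the Manhattan metric $d_1((x_1,x_2),(y_1,y_2))=|x_1-y_1|+|x_2-y_2|$ and $\kappa=c_1$. Then $H_1(X,Y)=1$ and $\delta_{d}(X,Y)\ge 2n-1$.
   Context: $[a,b]_{\mathbb{Z}}$ denotes $\{k\in\mathbb{Z}: a\le k\le b\}$. In $\mathbb{Z}^2$, two distinct points are $c_1$-adjacent if they differ by exactly $1$ in exactly one coordinate and agree in the other (4-adjacency). A function $f$ between subsets of $\mathbb{Z}^2$ is $c_1$-continuous if whenever $x,x'$ are $c_1$-adjacent, $f(x)$ and $f(x')$ are equal or $c_1$-adjacent. $H_1$ is the Hausdorff metric based on $d_1$: for nonempty finite $A,B$, $H_1(A,B)=\min\{\varepsilon\ge0 : \forall a\in A\ \exists b\in B,\ d_1(a,b)\le\varepsilon,\ \text{and}\ \forall b\in B\ \exists a\in A,\ d_1(a,b)\le\varepsilon\}$. Borsuk's metric of continuity $\delta_d(X,Y)$ is the greatest lower bound of the numbers $t>0$ such that there exist $c_1$-continuous maps $f:X\to Y$ and $g:Y\to X$ with $d(x,f(x))\le t$ for all $x\in X$ and $d(y,g(y))\le t$ for all $y\in Y$. *)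

(* Defs.v *)
From Stdlib Require Import Reals ZArith Lra Lia.
From Coquelicot Require Import Coquelicot.
Open Scope R_scope.

Definition pt := (Z * Z)%type.

Definition d1 (p q : pt) : R :=
  IZR (Z.abs (fst p - fst q) + Z.abs (snd p - snd q))%Z.

Definition c1_adj (p q : pt) : Prop :=
  (fst p = fst q /\ Z.abs (snd p - snd q) = 1%Z) \/
  (snd p = snd q /\ Z.abs (fst p - fst q) = 1%Z).

Definition c1_continuous (A B : pt -> Prop) (f : pt -> pt) : Prop :=
  (forall x, A x -> B (f x)) /\
  (forall x x', A x -> A x' -> c1_adj x x' -> f x = f x' \/ c1_adj (f x) (f x')).

Definition hausdorff_ok (A B : pt -> Prop) (eps : R) : Prop :=
  0 <= eps /\
  (forall a, A a -> exists b, B b /\ d1 a b <= eps) /\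
  (forall b, B b -> exists a, A a /\ d1 a b <= eps).

(* H_1(A,B) = min of admissible eps (taken as greatest lower bound) *)
Definition H1 (A B : pt -> Prop) : Rbar := Glb_Rbar (hausdorff_ok A B).

Definition borsuk_ok (X Y : pt -> Prop) (t : R) : Prop :=
  0 < t /\ exists f g : pt -> pt,
    c1_continuous X Y f /\ c1_continuous Y X g /\
    (forall x, X x -> d1 x (f x) <= t) /\
    (forall y, Y y -> d1 y (g y) <= t).

Definition delta_d1 (X Y : pt -> Prop) : Rbar := Glb_Rbar (borsuk_ok X Y).

Definition sq_boundary (n : Z) (p : pt) : Prop :=
  Z.max (Z.abs (fst p)) (Z.abs (snd p)) = n.

Definition sq_boundary_minus (n : Z) (p : pt) : Prop :=
  sq_boundary n p /\ p <> (n, n).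

(* Main.v *)
Require Import Defs.
From Stdlib Require Import Reals ZArith Lra Lia.
From Coquelicot Require Import Coquelicot.
Open Scope R_scope.

Definition base (n m : Z) : pt :=
  if (m <=? 2*n)%Z then (n - m, n)%Z
  else if (m <=? 4*n)%Z then (-n, 3*n - m)%Z
  else if (m <=? 6*n)%Z then (m - 5*n, -n)%Z
  else (n, m - 7*n)%Z.

Definition param (n k : Z) : pt := base n (k mod (8*n))%Z.

Definition idx (n : Z) (p : pt) : Z :=
  let (x,y) := p in
  if (y =? n)%Z then (n - x)%Z else if (x =? -n)%Z then (3*n - y)%Z
  else if (y =? -n)%Z then (x + 5*n)%Z else (7*n + y)%Z.

Ltac dz := repeat match goal with
 | |- context [if (?a <=? ?b)%Z then _ else _] => destruct (Z.leb_spec a b)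
 | |- context [if (?a =? ?b)%Z then _ else _] => destruct (Z.eqb_spec a b)
 end.

Lemma L_bd n m : (0 < n)%Z -> (0 <= m < 8*n)%Z -> sq_boundary n (base n m).
Proof. intros. unfold sq_boundary, base. dz; cbn [fst snd]; lia. Qed.

Lemma L_adj n m : (0 < n)%Z -> (0 <= m)%Z -> (m + 1 < 8*n)%Z ->
  c1_adj (base n m) (base n (m+1)).
Proof. intros. unfold c1_adj, base. dz; cbn [fst snd]; lia. Qed.

Lemma L_adjw n : (0 < n)%Z -> c1_adj (base n (8*n-1)) (base n 0).
Proof. intros. unfold c1_adj, base. dz; cbn [fst snd]; lia. Qed.

Lemma L_anti n m : (0 < n)%Z -> (0 <= m < 4*n)%Z ->
  fst (base n (m + 4*n)) = (- fst (base n m))%Z /\ snd (base n (m + 4*n)) = (- snd (base n m))%Z.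
Proof. intros. unfold base. dz; cbn [fst snd]; lia. Qed.

Lemma L_idx n p : (0 < n)%Z -> sq_boundary n p ->
  (0 <= idx n p < 8*n)%Z /\ base n (idx n p) = p.
Proof.
  intros. destruct p as [x y]. unfold sq_boundary in *; cbn [fst snd] in *.
  unfold idx. dz; unfold base; dz; (split; [lia | f_equal; lia]).
Qed.

Lemma bnd n x y : Z.max (Z.abs x) (Z.abs y) = n ->
  (-n <= x <= n /\ -n <= y <= n /\ (x = n \/ x = -n \/ y = n \/ y = -n))%Z.
Proof. intros; lia. Qed.

Lemma L_idxadj n x y x' y' : (0 < n)%Z -> sq_boundary n (x,y) -> sq_boundary n (x',y') ->
  (x <> n \/ y <> n)%Z -> (x' <> n \/ y' <> n)%Z -> c1_adj (x,y) (x',y') ->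
  (Z.abs (idx n (x,y) - idx n (x',y')) <= 1)%Z.
Proof.
  intros Hn B1 B2 N1 N2 A. unfold sq_boundary, c1_adj in *; cbn [fst snd] in *.
  apply bnd in B1; apply bnd in B2.
  destruct A as [[e a]|[e a]];
  (assert (a' : (x - x' = 1 \/ x - x' = -1 \/ y - y' = 1 \/ y - y' = -1)%Z) by lia); clear a;
  unfold idx; dz; lia.
Qed.

Lemma mod_succ N k : (1 < N)%Z ->
  ((k+1) mod N = if (k mod N + 1 =? N) then 0 else k mod N + 1)%Z.
Proof.
  intros. rewrite Z.add_mod by lia. rewrite (Z.mod_small 1 N) by lia.
  pose proof (Z.mod_pos_bound k N ltac:(lia)).
  destruct (Z.eqb_spec (k mod N + 1) N) as [e|e].
  - rewrite e; apply Z_mod_same_full.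
  - apply Z.mod_small; lia.
Qed.

Lemma mod_half n k : (0 < n)%Z ->
  ((k + 4*n) mod (8*n) = if (k mod (8*n) <? 4*n) then k mod (8*n) + 4*n else k mod (8*n) - 4*n)%Z.
Proof.
  intros. rewrite Z.add_mod by lia. rewrite (Z.mod_small (4*n) (8*n)) by lia.
  pose proof (Z.mod_pos_bound k (8*n) ltac:(lia)).
  destruct (Z.ltb_spec (k mod (8*n)) (4*n)).
  - apply Z.mod_small; lia.
  - replace (k mod (8*n) + 4*n)%Z with ((k mod (8*n) - 4*n) + 1*(8*n))%Z by ring.
    rewrite Z_mod_plus_full. apply Z.mod_small; lia.
Qed.

Lemma P1 n k : (0 < n)%Z -> sq_boundary n (param n k).
Proof. intros. apply L_bd; auto. apply Z.mod_pos_bound; lia. Qed.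

Lemma P2 n k : (0 < n)%Z -> c1_adj (param n k) (param n (k+1)).
Proof.
  intros. unfold param. rewrite mod_succ by lia.
  pose proof (Z.mod_pos_bound k (8*n) ltac:(lia)).
  destruct (Z.eqb_spec (k mod (8*n) + 1) (8*n)) as [e|e].
  - replace (k mod (8*n))%Z with (8*n-1)%Z by lia. apply L_adjw; auto.
  - apply L_adj; lia.
Qed.

Lemma P3 n k : (0 < n)%Z ->
  fst (param n (k + 4*n)) = (- fst (param n k))%Z /\ snd (param n (k + 4*n)) = (- snd (param n k))%Z.
Proof.
  intros. unfold param. rewrite mod_half by lia.
  pose proof (Z.mod_pos_bound k (8*n) ltac:(lia)).
  destruct (Z.ltb_spec (k mod (8*n)) (4*n)).
  - apply L_anti; lia.
  - destruct (L_anti n (k mod (8*n) - 4*n)%Z) as [A B]; try lia.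
    replace (k mod (8 * n) - 4 * n + 4 * n)%Z with (k mod (8*n))%Z in * by ring.
    rewrite A, B. lia.
Qed.

Lemma Pper n k : (0 < n)%Z -> param n (k - 4*n) = param n (k + 4*n).
Proof.
  intros. unfold param. f_equal.
  replace (k + 4*n)%Z with ((k - 4*n) + 1*(8*n))%Z by ring.
  rewrite Z_mod_plus_full. reflexivity.
Qed.

Lemma Dfar n k : (0 < n)%Z ->
  (2*n <= Z.abs (fst (param n k) - fst (param n (k+4*n))) + Z.abs (snd (param n k) - snd (param n (k+4*n))))%Z.
Proof.
  intros. destruct (P3 n k H) as [A B]. rewrite A, B.
  pose proof (P1 n k H). unfold sq_boundary in *. lia.
Qed.

Lemma Dfar1 n k : (0 < n)%Z ->
  (2*n - 1 <= Z.abs (fst (param n k) - fst (param n (k+4*n-1))) + Z.abs (snd (param n k) - snd (param n (k+4*n-1))))%Z.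
Proof.
  intros. pose proof (Dfar n k H). pose proof (P2 n (k+4*n-1) H).
  replace (k + 4*n - 1 + 1)%Z with (k + 4*n)%Z in H1 by ring.
  unfold c1_adj in H1. lia.
Qed.

Lemma crossing (e : Z -> Z) v (len : nat) : forall a,
  (e a >= v)%Z -> (e (a + Z.of_nat len) < v)%Z -> exists k, (e k >= v /\ e (k+1) < v)%Z.
Proof.
  induction len; intros a H1 H2.
  - simpl in H2. rewrite Z.add_0_r in H2. lia.
  - destruct (Z_lt_le_dec (e (a+1)%Z) v).
    + exists a; lia.
    + apply (IHlen (a+1)%Z); [lia|]. rewrite Nat2Z.inj_succ in H2.
      replace (a + 1 + Z.of_nat len)%Z with (a + Z.succ (Z.of_nat len))%Z by lia. auto.
Qed.

Lemma neq_pair (x y n : Z) : (x, y) <> (n, n) -> (x <> n \/ y <> n)%Z.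
Proof. intros H. destruct (Z.eq_dec x n); [subst; right; intro; subst; auto | left; auto]. Qed.

Lemma base0 n : (0 < n)%Z -> base n 0 = (n, n).
Proof. intros. unfold base. destruct (Z.leb_spec 0 (2*n)); [f_equal; lia | lia]. Qed.

Lemma part1 n : (0 < n)%Z -> H1 (sq_boundary n) (sq_boundary_minus n) = Finite 1.
Proof.
  intros hn. apply is_glb_Rbar_unique. split.
  - intros eps [H0 [HA HB]]. simpl.
    destruct (HA (n, n)) as [[b1 b2] [[Hb Hbn] Hd]].
    { unfold sq_boundary; cbn [fst snd]; lia. }
    destruct (Rlt_le_dec eps 1) as [Hl|Hl]; auto.
    exfalso. unfold Defs.d1 in Hd; cbn [fst snd] in Hd.
    assert (Hz: (Z.abs (n - b1) + Z.abs (n - b2) < 1)%Z). { apply lt_IZR. lra. }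
    apply Hbn. f_equal; lia.
  - intros b Hb. apply Hb. split; [lra|split].
    + intros [x y] Ha. destruct (Z.eq_dec x n), (Z.eq_dec y n); subst.
      * exists ((n-1)%Z, n). split.
        -- split. unfold sq_boundary in *; cbn [fst snd] in *; lia.
           intro E; inversion E; lia.
        -- unfold Defs.d1; cbn [fst snd]. replace (Z.abs (n - (n - 1)) + Z.abs (n - n))%Z with 1%Z by lia. lra.
      * exists (n, y). split. split; auto. intro E; inversion E; auto.
        unfold Defs.d1; cbn [fst snd]. rewrite !Z.sub_diag. simpl. lra.
      * exists (x, n). split. split; auto. intro E; inversion E; auto.
        unfold Defs.d1; cbn [fst snd]. rewrite !Z.sub_diag. simpl. lra.
      * exists (x, y). split. split; auto. intro E; inversion E; auto.
        unfold Defs.d1; cbn [fst snd]. rewrite !Z.sub_diag. simpl. lra.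
    + intros a [Ha _]. exists a. split; auto. destruct a.
      unfold Defs.d1; cbn [fst snd]. rewrite !Z.sub_diag. simpl. lra.
Qed.

Lemma part2 n t : (0 < n)%Z -> borsuk_ok (sq_boundary n) (sq_boundary_minus n) t ->
  2 * IZR n - 1 <= t.
Proof.
  intros hn [Ht [f [g [[fY fc] [gc [fd gd]]]]]].
  set (P := fun k => idx n (f (param n k))).
  assert (HP : forall k, (1 <= P k <= 8*n - 1)%Z /\ f (param n k) = param n (P k)).
  { intros k. destruct (fY _ (P1 n k hn)) as [Hb Hne].
    destruct (L_idx n _ hn Hb) as [Hr He]. unfold P.
    assert (idx n (f (param n k)) <> 0%Z).
    { intro E. rewrite E, base0 in He by auto. auto. }
    split; [lia|]. unfold param at 2. rewrite Z.mod_small by lia. auto. }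
  assert (HS : forall k, (Z.abs (P (k+1) - P k) <= 1)%Z).
  { intros k. destruct (fc _ _ (P1 n k hn) (P1 n (k+1) hn) (P2 n k hn)) as [E|E].
    - unfold P. rewrite E. lia.
    - unfold P. destruct (fY _ (P1 n k hn)) as [B1 N1]. destruct (fY _ (P1 n (k+1) hn)) as [B2 N2].
      destruct (f (param n k)) as [x y] eqn:Ex. destruct (f (param n (k+1))) as [x' y'] eqn:Ex'.
      pose proof (L_idxadj n x' y' x y hn B2 B1 (neq_pair _ _ _ N2) (neq_pair _ _ _ N1)).
      assert (c1_adj (x', y') (x, y)) by (unfold c1_adj in *; cbn [fst snd] in *; lia).
      specialize (H H0). lia. }
  assert (HW : P (8*n)%Z = P 0%Z).
  { unfold P, param. rewrite Z_mod_same_full, Zmod_0_l. reflexivity. }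
  set (e := fun k => (P k - k)%Z).
  assert (Hk : exists k, (e k = 4*n \/ e k = 4*n - 1 \/ e k = -4*n \/ e k = -4*n-1)%Z).
  { pose proof (HS (8*n-1)%Z) as H8. replace (8*n-1+1)%Z with (8*n)%Z in H8 by ring.
    rewrite HW in H8.
    pose proof (HP 0%Z) as [H0 _]. pose proof (HP (8*n-1)%Z) as [H9 _].
    assert (E9 : (0 + Z.of_nat (Z.to_nat (8*n-1)) = 8*n-1)%Z) by lia.
    destruct (Z_lt_le_dec (e 0%Z) (4*n-1)).
    - destruct (crossing e (-4*n+1)%Z (Z.to_nat (8*n-1)) 0%Z) as [k [Ka Kb]].
      + unfold e in *; lia.
      + rewrite E9. unfold e in *. lia.
      + exists (k+1)%Z. pose proof (HS k). unfold e in *. lia.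
    - destruct (crossing e (4*n-1)%Z (Z.to_nat (8*n-1)) 0%Z) as [k [Ka Kb]].
      + unfold e in *; lia.
      + rewrite E9. unfold e in *. lia.
      + exists k. pose proof (HS k). unfold e in *. lia. }
  destruct Hk as [k Hk].
  destruct (HP k) as [_ Hf].
  assert (D : (2*n - 1 <= Z.abs (fst (param n k) - fst (f (param n k))) +
                 Z.abs (snd (param n k) - snd (f (param n k))))%Z).
  { rewrite Hf. unfold e in Hk.
    destruct Hk as [E|[E|[E|E]]].
    - replace (P k) with (k + 4*n)%Z by lia. pose proof (Dfar n k hn). lia.
    - replace (P k) with (k + 4*n - 1)%Z by lia. apply Dfar1; auto.
    - replace (P k) with (k - 4*n)%Z by lia. rewrite Pper by auto. pose proof (Dfar n k hn). lia.
    - replace (P k) with ((k - 1) - 4*n)%Z by lia. rewrite Pper by auto.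
      replace (k - 1 + 4*n)%Z with (k + 4*n - 1)%Z by ring. apply Dfar1; auto. }
  pose proof (fd _ (P1 n k hn)) as Hd. unfold Defs.d1 in Hd.
  apply IZR_le in D. rewrite minus_IZR, mult_IZR in D. lra.
Qed.

Theorem theorem2p7 (n : Z) (hn : (0 < n)%Z) :
  H1 (sq_boundary n) (sq_boundary_minus n) = Finite 1 /\
  Rbar_le (Finite (2 * IZR n - 1)) (delta_d1 (sq_boundary n) (sq_boundary_minus n)).
Proof.
  split.
  - apply part1; auto.
  - unfold delta_d1. destruct (Glb_Rbar_correct (borsuk_ok (sq_boundary n) (sq_boundary_minus n))) as [_ G].
    apply G. intros t Ht. simpl. apply part2; auto.
Qed.
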